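(* Let $R$ be a multivariate convex risk measure and $v\in\mathbb{R}^J$. For every $u\in\mathbb{L}^J$, $$\inf\{\alpha\in\mathbb{R}\mid v+\alpha\mathbf{1}\in R(u)\}=\sup\Big\{\gamma^{\mathsf T}\big(\mathbb{E}^\mu[u]-v\big)-\beta(\mu,\gamma)\ \Big|\ \mu\in\mathbb{M}_1^J,\ \gamma\in\mathbb{R}^J_+,\ \gamma^{\mathsf T}\mathbf{1}=1\Big\}.$$
   Context: Probability space: $\Omega=\{1,\dots,I\}$, $I\ge 2$, with probabilities $p_i>0$. $\mathbb{L}^J$ denotes random vectors $u=(u_1,\dots,u_I)$, $u_i\in\mathbb{R}^J$; $u\le v$ means $u_i^j\le v_i^j$ for all $i,j$. $\mathbf{1}=(1,\dots,1)^{\mathsf T}\in\mathbb{R}^J$. A multivariate convex risk measure is a map $R:\mathbb{L}^J\to 2^{\mathbb{R}^J}$ such that: (A1) $u\le v$ implies $R(u)\supseteq R(v)$; (A2) $R(u+z)=R(u)+z$ for all $z\in\mathbb{R}^J$; (A3) $R(u)\notin\{\emptyset,\mathbb{R}^J\}$; (A4) $R(\gamma u+(1-\gamma)v)\supseteq\gamma R(u)+(1-\gamma)R(v)$ for $\gamma\in(0,1)$; (A5) the acceptance set $\mathcal{A}=\{u\in\mathbb{L}^J\mid 0\in R(u)\}$ is closed. $\mathbb{M}_1^J$ denotes the set of $J$-tuples $\mu=(\mu^1,\dots,\mu^J)$ of probability measures on $\Omega$, with $\mu_i=(\mu_i^1,\dots,\mu_i^J)^{\mathsf T}$, and $\mathbb{E}^\mu[u]=\sum_{i\in\Omega}\mu_i\cdot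 u_i$, where $\cdot$ is the componentwise (Hadamard) product. The minimal penalty function is $\beta(\mu,w)=\sup_{u\in\mathcal{A}}w^{\mathsf T}\mathbb{E}^\mu[u]$ for $\mu\in\mathbb{M}_1^J$, $w\in\mathbb{R}^J_+\setminus\{0\}$; it is known that $\inf_{z\in R(u)}w^{\mathsf T}z=\sup_{\mu\in\mathbb{M}_1^J}(w^{\mathsf T}\mathbb{E}^\mu[u]-\beta(\mu,w))$ for all $u$ and $w\in\mathbb{R}^J_+\setminus\{0\}$. *)

(* Defs.v *)
From Stdlib Require Import Reals.
From mathcomp Require Import all_boot.
Set Implicit Arguments.
Unset Strict Implicit.
Unset Printing Implicit Defensive.

Open Scope R_scope.

Definition rsum (n : nat) (F : 'I_n -> R) : R := \big[Rplus/0]_(i < n) F i.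

(* R^J and L^J = random vectors on Omega = {0,...,I-1} with values in R^J *)
Definition vecR (J : nat) := 'I_J -> R.
Definition LJ (I J : nat) := 'I_I -> 'I_J -> R.

Definition one_vec (J : nat) : vecR J := fun _ => 1.
Definition dot (J : nat) (w z : vecR J) : R := rsum (fun j => w j * z j).

Definition leL (I J : nat) (u v : LJ I J) : Prop := forall i j, u i j <= v i j.
Definition addc (I J : nat) (u : LJ I J) (z : vecR J) : LJ I J := fun i j => u i j + z j.
Definition convL (I J : nat) (g : R) (u v : LJ I J) : LJ I J :=
  fun i j => g * u i j + (1 - g) * v i j.

(* closedness in L^J ~ R^(I*J) (sup-norm balls; same topology as Euclidean) *)
Definition closedL (I J : nat) (A : LJ I J -> Prop) : Prop :=
  forall u, ~ A u -> exists eps, 0 < eps /\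
    forall w, (forall i j, Rabs (w i j - u i j) < eps) -> ~ A w.

(* a set-valued map R : L^J -> 2^(R^J), sets represented as predicates *)
Definition setmap (I J : nat) := LJ I J -> vecR J -> Prop.

Definition acceptance (I J : nat) (Rm : setmap I J) : LJ I J -> Prop :=
  fun u => Rm u (fun _ => 0).

Definition multivariate_convex_risk_measure (I J : nat) (Rm : setmap I J) : Prop :=
  (forall u v, leL u v -> forall z, Rm v z -> Rm u z) /\
  (forall u z x, Rm (addc u z) x <-> exists y, Rm u y /\ x = (fun j => y j + z j)) /\
  (forall u, (exists x, Rm u x) /\ (exists x, ~ Rm u x)) /\
  (forall g u v, 0 < g < 1 -> forall x y, Rm u x -> Rm v y ->
      Rm (convL g u v) (fun j => g * x j + (1 - g) * y j)) /\
  closedL (acceptance Rm).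

(* M_1^J: J-tuples of probability measures on Omega; mu j i = mu^j({i}) *)
Definition M1 (I J : nat) (mu : 'I_J -> 'I_I -> R) : Prop :=
  (forall j i, 0 <= mu j i) /\ (forall j, rsum (fun i => mu j i) = 1).

Definition Emu (I J : nat) (mu : 'I_J -> 'I_I -> R) (u : LJ I J) : vecR J :=
  fun j => rsum (fun i => mu j i * u i j).

(* the set whose supremum is the minimal penalty beta(mu, w) *)
Definition penalty_set (I J : nat) (Rm : setmap I J) (mu : 'I_J -> 'I_I -> R)
  (w : vecR J) : R -> Prop :=
  fun x => exists u, acceptance Rm u /\ x = dot w (Emu mu u).

Definition is_glb (E : R -> Prop) (m : R) : Prop :=
  (forall x, E x -> m <= x) /\ (forall b, (forall x, E x -> b <= x) -> b <= m).

(* Main.v *)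
Require Import Defs.
From Stdlib Require Import Reals.
From mathcomp Require Import all_boot.
Open Scope R_scope.
From HB Require Import structures.
From Stdlib Require Import Lra Lia ClassicalEpsilon FunctionalExtensionality Classical.
Open Scope R_scope.
Set Implicit Arguments. Unset Strict Implicit.
HB.instance Definition _ := Monoid.isComLaw.Build R 0 Rplus (fun x y z => esym (Rplus_assoc x y z)) Rplus_comm Rplus_0_l.
Lemma rsum_ext n (f g : 'I_n -> R) : (forall i, f i = g i) -> rsum f = rsum g.
Proof. by move=> H; rewrite /rsum; apply: eq_bigr. Qed.
Lemma rsum_add n (f g : 'I_n -> R) : rsum (fun i => f i + g i) = rsum f + rsum g.
Proof. by rewrite /rsum big_split. Qed.
Lemma rsum_scal n c (f : 'I_n -> R) : rsum (fun i => c * f i) = c * rsum f.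
Proof. rewrite /rsum; elim/big_rec2: _ => [|i y1 y2 _ ->]; ring. Qed.
Lemma rsum_le n (f g : 'I_n -> R) : (forall i, f i <= g i) -> rsum f <= rsum g.
Proof. move=> H; rewrite /rsum; apply: (big_ind2 (fun a b => a <= b)) => //; try lra; move=> *; lra. Qed.
Lemma rsum_0 n : rsum (fun _ : 'I_n => 0) = 0.
Proof. by rewrite /rsum big1. Qed.
Lemma rsum_term n (f : 'I_n -> R) k : (forall i, 0 <= f i) -> f k <= rsum f.
Proof. move=> H; rewrite /rsum (bigD1 k) //=.
rewrite -[X in X <= _]Rplus_0_r; apply: Rplus_le_compat_l.
by apply: (big_ind (fun a => 0 <= a)) => //; try lra; move=> *; lra.
Qed.
Lemma rsum_ind n (k : 'I_n) c : rsum (fun i => if i == k then c else 0) = c.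
Proof. rewrite /rsum (bigD1 k) //= eqxx big1 ?Rplus_0_r // => i /negPf ->. done. Qed.
Lemma rsum_ge0 n (f : 'I_n -> R) : (forall i, 0 <= f i) -> 0 <= rsum f.
Proof. move=> H; rewrite -(@rsum_0 n); exact: rsum_le. Qed.

Section DSsec.
Variables I J : nat.
Definition DS (F : 'I_I -> 'I_J -> R) := rsum (fun j => rsum (fun i => F i j)).
Lemma DS_ext F G : (forall i j, F i j = G i j) -> DS F = DS G.
Proof. move=> H; apply: rsum_ext => j; apply: rsum_ext => i; exact: H. Qed.
Lemma DS_add F G : DS (fun i j => F i j + G i j) = DS F + DS G.
Proof. rewrite /DS -rsum_add; apply: rsum_ext => j; exact: rsum_add. Qed.
Lemma DS_scal c F : DS (fun i j => c * F i j) = c * DS F.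
Proof. rewrite /DS -rsum_scal; apply: rsum_ext => j; exact: rsum_scal. Qed.
Lemma DS_le F G : (forall i j, F i j <= G i j) -> DS F <= DS G.
Proof. move=> H; apply: rsum_le => j; apply: rsum_le => i; exact: H. Qed.
Lemma DS_ge0 F : (forall i j, 0 <= F i j) -> 0 <= DS F.
Proof. move=> H; apply: rsum_ge0 => j; apply: rsum_ge0 => i; exact: H. Qed.
Lemma DS_term F i j : (forall i j, 0 <= F i j) -> F i j <= DS F.
Proof. move=> H; apply: (Rle_trans _ (rsum (fun i => F i j))).
  exact: (@rsum_term _ (fun i => F i j) i (fun k => H k j)).
rewrite /DS; apply: (@rsum_term _ (fun j => rsum (fun i => F i j)) j) => k.
by apply: rsum_ge0. Qed.
Lemma DS_lin3 c1 c2 c3 F G H :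
  c1 * DS F + c2 * DS G + c3 * DS H = DS (fun i j => c1 * F i j + c2 * G i j + c3 * H i j).
Proof. by rewrite !DS_add !DS_scal. Qed.
Definition nrm2 (x : LJ I J) := DS (fun i j => x i j * x i j).
Lemma nrm2_ge0 x : 0 <= nrm2 x.
Proof. apply: DS_ge0 => i j; nra. Qed.
Lemma nrm2_coord x i j : x i j * x i j <= nrm2 x.
Proof. apply: (@DS_term (fun i j => x i j * x i j) i j) => k l; nra. Qed.
End DSsec.

Lemma small_inv (d : R) : 0 < d -> exists N, forall n, le N n -> / (INR n + 1) < d.
Proof.
move=> hd; have [N [HN HN0]] := archimed_cor1 d hd; exists N => n hn.
have h1 : INR N <= INR n by apply: le_INR.
have h0 : 0 < INR N by apply: lt_0_INR.
apply: Rle_lt_trans HN; apply: Rinv_le_contravar => //; lra.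
Qed.

Lemma abs_lt_sq x e : 0 < e -> x * x < e * e -> Rabs x < e.
Proof. move=> he h; split_Rabs; nra. Qed.

Lemma lim_close (U : nat -> R) l c n d :
  Un_cv U l -> (forall m, le n m -> Rabs (c - U m) < d) -> Rabs (c - l) <= d.
Proof.
move=> hU hb; apply: Rnot_lt_le => hlt.
have he : Rabs (c - l) - d > 0 by lra.
have [N HN] := hU _ he.
have h1 := HN (Nat.max n N) ltac:(lia).
have h2 := hb (Nat.max n N) ltac:(lia).
rewrite /R_dist in h1; move: h1 h2 hlt; split_Rabs; lra.
Qed.

Section Proj.
Variables (I J : nat) (A : LJ I J -> Prop) (w0 : LJ I J).
Hypothesis Hconv : forall a b t, A a -> A b -> 0 <= t <= 1 ->
  A (fun i j => t * a i j + (1 - t) * b i j).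
Hypothesis Hclosed : closedL A.
Hypothesis Hne : exists a, A a.

Definition dist2 (a : LJ I J) := nrm2 (fun i j => w0 i j - a i j).

Lemma glb_exists : exists D, (forall a, A a -> D <= dist2 a) /\
  (forall e, 0 < e -> exists a, A a /\ dist2 a < D + e).
Proof.
pose E := fun y => exists a, A a /\ y = - dist2 a.
have hb : bound E.
  exists 0 => y [a [_ ->]]; have := nrm2_ge0 (fun i j => w0 i j - a i j); rewrite /dist2; lra.
have hne : exists y, E y by case: Hne => a ha; exists (- dist2 a); exists a.
case: (completeness E hb hne) => M [HM1 HM2].
exists (- M); split.
  move=> a ha; have := HM1 (- dist2 a) (ex_intro _ a (conj ha erefl)); lra.
move=> e he; apply: NNPP => hn.
have : M <= M - e.
  apply: HM2 => y [a [ha ->]].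
  have : ~ (dist2 a < - M + e) by move=> h; apply: hn; exists a.
  lra.
lra.
Qed.


Lemma pt_ineq x y z d : Rabs (z - y) <= d -> d <= 1 ->
  (x - y) * (x - y) <= (x - z) * (x - z) + d * (2 * Rabs (x - y) + 1).
Proof. move=> h h1; split_Rabs; nra. Qed.

Lemma minimizer : exists s, A s /\ forall a, A a -> dist2 s <= dist2 a.
Proof.
have [D [HD1 HD2]] := glb_exists.
have Hex : forall n:nat, exists a, A a /\ dist2 a < D + / (INR n + 1).
  move=> n; apply: HD2; apply: Rinv_0_lt_compat; have := pos_INR n; lra.
pose sq n := proj1_sig (constructive_indefinite_description _ (Hex n)).
have Hsq n : A (sq n) /\ dist2 (sq n) < D + / (INR n + 1) :=
  proj2_sig (constructive_indefinite_description _ (Hex n)).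
have Hpar : forall n m i j, (sq n i j - sq m i j) * (sq n i j - sq m i j)
    <= 2 * / (INR n + 1) + 2 * / (INR m + 1).
  move=> n m i j.
  apply: Rle_trans (nrm2_coord (fun i j => sq n i j - sq m i j) i j) _.
  pose mid := fun i j => /2 * sq n i j + (1 - /2) * sq m i j.
  have hmid : A mid by apply: Hconv; [exact: (Hsq n).1 | exact: (Hsq m).1 | lra].
  have h1 := HD1 _ hmid.
  have e : nrm2 (fun i j => sq n i j - sq m i j)
     = 2 * dist2 (sq n) + 2 * dist2 (sq m) + (-4) * dist2 mid.
    rewrite /dist2 /nrm2 DS_lin3; apply: DS_ext => k l; rewrite /mid; field.
  have := (Hsq n).2; have := (Hsq m).2; lra.
have Hcau : forall i j, Cauchy_crit (fun n => sq n i j).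
  move=> i j e he.
  have [N HN] := @small_inv (e*e/4) ltac:(nra).
  exists N => n m hn hm; rewrite /R_dist; apply: abs_lt_sq => //.
  have := Hpar n m i j; have := HN n hn; have := HN m hm; lra.
pose l := fun i j => proj1_sig (R_complete _ (Hcau i j)).
have Hl i j : Un_cv (fun n => sq n i j) (l i j) := proj2_sig (R_complete _ (Hcau i j)).
have Hunif : forall d, 0 < d -> exists N, forall n, le N n ->
    forall i j, Rabs (sq n i j - l i j) <= d.
  move=> d hd; have [N HN] := @small_inv (d*d/4) ltac:(nra).
  exists N => n hn i j; apply: (@lim_close _ _ _ n _ (Hl i j)) => m hm.
  apply: abs_lt_sq => //; have := Hpar n m i j; have := HN n hn;
  have := HN m ltac:(lia); lra.
have HAl : A l.
  apply: NNPP => hn; have [e [he Hb]] := Hclosed hn.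
  have [N HN] := Hunif (e/2) ltac:(lra).
  apply: (Hb (sq N)); [move=> i j; have := HN N (le_n N) i j; lra | exact: (Hsq N).1].
exists l; split => // a ha.
have hDa := HD1 _ ha.
suff H : forall e, 0 < e -> dist2 l <= D + e.
  apply: Rnot_lt_le => hlt.
  have := H ((dist2 l - D) / 2) ltac:(lra); lra.
move=> e he.
pose C := DS (fun i j => 2 * Rabs (w0 i j - l i j) + 1).
have hC : 0 <= C by apply: DS_ge0 => i j; have := Rabs_pos (w0 i j - l i j); lra.
pose d := Rmin 1 (e / (2 * (C + 1))).
have hd0 : 0 < d by apply: Rmin_glb_lt; [lra | apply: Rdiv_lt_0_compat; lra].
have hd1 : d <= 1 := Rmin_l _ _.
have hd2 : d <= e / (2 * (C+1)) := Rmin_r _ _.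
have [N1 HN1] := Hunif d hd0.
have [N2 HN2] := @small_inv (e/2) ltac:(lra).
pose n := Nat.max N1 N2.
have hsn := (Hsq n).2; have hin := HN2 n ltac:(lia).
have key : dist2 l <= dist2 (sq n) + d * C.
  rewrite /dist2 /nrm2 /C -DS_scal -DS_add; apply: DS_le => i j.
  apply: pt_ineq => //; have := HN1 n ltac:(lia) i j; split_Rabs; lra.
have : d * C <= e/2.
  set q := e / (2 * (C + 1)) in hd2.
  have hq : q * (2 * (C + 1)) = e by rewrite /q; field; lra.
  have : 0 <= q by rewrite /q; apply: Rlt_le; apply: Rdiv_lt_0_compat; lra.
  nra.
lra.
Qed.

Lemma varineq s : A s -> (forall a, A a -> dist2 s <= dist2 a) -> forall a, A a ->
  DS (fun i j => (w0 i j - s i j) * (a i j - s i j)) <= 0.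
Proof.
move=> hs hmin a ha.
set P := DS _.
pose Q := nrm2 (fun i j => a i j - s i j).
have hQ : 0 <= Q := nrm2_ge0 _.
have Ht : forall t, 0 < t <= 1 -> 2 * P <= t * Q.
  move=> t ht.
  have hc : A (fun i j => t * a i j + (1 - t) * s i j) by apply: Hconv => //; lra.
  have := hmin _ hc.
  have e : dist2 (fun i j => t * a i j + (1 - t) * s i j) = 1 * dist2 s + (-2 * t) * P + (t*t) * Q.
    rewrite /dist2 /nrm2 /P /Q DS_lin3; apply: DS_ext => i j; ring.
  rewrite e => h.
  have : 0 <= t * (t * Q - 2 * P) by nra.
  move=> h2; have := Rmult_le_0_lt_compat; nra.
apply: Rnot_lt_le => hP.
pose t := Rmin 1 (P / (Q + 1)).
have ht0 : 0 < t by apply: Rmin_glb_lt; [lra | apply: Rdiv_lt_0_compat; lra].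
have ht1 : t <= 1 := Rmin_l _ _.
have ht2 : t <= P / (Q + 1) := Rmin_r _ _.
have := Ht t (conj ht0 ht1).
set q := P / (Q + 1) in ht2.
have hq : q * (Q + 1) = P by rewrite /q; field; lra.
nra.
Qed.

End Proj.

Lemma emu_shift I J (mu : 'I_J -> 'I_I -> R) (g : vecR J) (u : LJ I J) (v : vecR J) al :
  M1 mu -> dot g (@one_vec J) = 1 ->
  dot g (Emu mu (fun i j => u i j - (v j + al * @one_vec J j)))
  = dot g (fun j => Emu mu u j - v j) - al.
Proof.
move=> [hM0 hM1] hg; rewrite /dot /Emu in hg *.
transitivity (rsum (fun j => g j * (rsum (fun i => mu j i * u i j) - v j) + (-al) * (g j * @one_vec J j))).
  apply: rsum_ext => j.
  rewrite (@rsum_ext _ _ (fun i => mu j i * u i j + (-(v j + al)) * mu j i)).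
    rewrite rsum_add rsum_scal; have := hM1 j; rewrite /one_vec => h; rewrite h; ring.
  by move=> i; rewrite /one_vec; ring.
rewrite rsum_add rsum_scal hg; ring.
Qed.

Section RM.
Variables (I J : nat) (p : 'I_I -> R).
Hypotheses (hp : forall i, 0 < p i) (hp1 : rsum p = 1).
Variables (Rm : setmap I J).
Hypothesis hR : multivariate_convex_risk_measure Rm.

Lemma rm_trans u x z : Rm u x -> Rm (addc u z) (fun j => x j + z j).
Proof. move=> h; case: hR => _ [H2 _]; apply/H2; by exists x. Qed.

Lemma rm_up u x y : Rm u x -> (forall j, x j <= y j) -> Rm u y.
Proof.
move=> h hxy; have := rm_trans (fun j => y j - x j) h.
have -> : (fun j => x j + (y j - x j)) = y by apply: functional_extensionality => j; ring.
case: hR => H1 _; apply: H1 => i j; rewrite /addc; have := hxy j; lra.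
Qed.

Lemma acc_conv a b t : acceptance Rm a -> acceptance Rm b -> 0 <= t <= 1 ->
  acceptance Rm (fun i j => t * a i j + (1 - t) * b i j).
Proof.
move=> ha hb ht; rewrite /acceptance.
case: (Req_dec t 0) => [->|h0].
  have -> : (fun i j => 0 * a i j + (1 - 0) * b i j) = b.
    by apply: functional_extensionality => i; apply: functional_extensionality => j; ring.
  exact: hb.
case: (Req_dec t 1) => [->|h1].
  have -> : (fun i j => 1 * a i j + (1 - 1) * b i j) = a.
    by apply: functional_extensionality => i; apply: functional_extensionality => j; ring.
  exact: ha.
case: hR => _ [_ [_ [H4 _]]].
have := H4 t a b ltac:(lra) _ _ ha hb.
have -> : (fun j : 'I_J => t * 0 + (1 - t) * 0) = (fun _ => 0)
  by apply: functional_extensionality => j; ring.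
done.
Qed.

Lemma acc_ne : exists a, acceptance Rm a.
Proof.
case: hR => _ [_ [H3 _]]; have [[x hx] _] := H3 (fun _ _ => 0).
exists (addc (fun _ _ => 0) (fun j => - x j)); rewrite /acceptance.
have := rm_trans (fun j => - x j) hx.
have -> : (fun j => x j + - x j) = (fun _ => 0)
  by apply: functional_extensionality => j; ring.
done.
Qed.

Lemma sep_main (v : vecR J) (u : LJ I J) a0 :
  ~ Rm u (fun j => v j + a0 * @one_vec J j) ->
  exists x, (exists (mu : 'I_J -> 'I_I -> R) (g : vecR J) (b : R),
              M1 mu /\ (forall j, 0 <= g j) /\ dot g (@one_vec J) = 1 /\
              is_lub (penalty_set Rm mu g) b /\
              x = dot g (fun j => Emu mu u j - v j) - b) /\ a0 < x.
Proof.
move=> hS.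
pose w0 : LJ I J := fun i j => u i j - (v j + a0 * @one_vec J j).
have hw0 : ~ acceptance Rm w0.
  move=> h; apply: hS; have := rm_trans (fun j => v j + a0 * @one_vec J j) h.
  have -> : addc w0 (fun j => v j + a0 * @one_vec J j) = u.
    by apply: functional_extensionality => i; apply: functional_extensionality => j;
      rewrite /addc /w0; ring.
  have -> : (fun j => 0 + (v j + a0 * @one_vec J j)) = (fun j => v j + a0 * @one_vec J j).
    by apply: functional_extensionality => j; ring.
  done.
have Hc : forall a b t, acceptance Rm a -> acceptance Rm b -> 0 <= t <= 1 ->
  acceptance Rm (fun i j => t * a i j + (1 - t) * b i j).
  by move=> a b t; apply: acc_conv.
case: (hR) => [H1 [H2 [H3 [H4 H5]]]].
have [s [hs hmin]] := @minimizer I J (acceptance Rm) w0 Hc H5 acc_ne.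
have hvi := @varineq I J (acceptance Rm) w0 Hc s hs hmin.
pose lam : LJ I J := fun i j => w0 i j - s i j.
have hlam0 : forall i0 j0, 0 <= lam i0 j0.
  move=> i0 j0.
  pose a : LJ I J := fun i j => s i j - (if (i == i0) && (j == j0) then 1 else 0).
  have ha : acceptance Rm a.
    apply: (H1 a s) hs => i j; rewrite /a; case: (_ && _); lra.
  have := hvi a ha.
  have -> : DS (fun i j => (w0 i j - s i j) * (a i j - s i j))
     = DS (fun i j => if j == j0 then (if i == i0 then - lam i0 j0 else 0) else 0).
    apply: DS_ext => i j; rewrite /a /lam.
    case: (i =P i0) => [->|hi]; case: (j =P j0) => [->|hj] /=; ring.
  rewrite /DS (@rsum_ext _ _ (fun j => if j == j0 then - lam i0 j0 else 0)).
    rewrite rsum_ind; lra.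
  move=> j; case: (j == j0); [exact: rsum_ind | exact: rsum_0].
have [eps [he Hb]] := H5 _ hw0.
have [i1 [j1 hij]] : exists i j, eps <= Rabs (s i j - w0 i j).
  apply: NNPP => hn; apply: (Hb s) hs => i j; apply: Rnot_le_lt => h; apply: hn; by exists i, j.
have hl1 : 0 < lam i1 j1.
  have := hlam0 i1 j1; rewrite /lam; move: hij; split_Rabs; lra.
pose L := fun j => rsum (fun i => lam i j).
have hL0 : forall j, 0 <= L j := fun j => rsum_ge0 (fun i => hlam0 i j).
pose sT := rsum L.
have hsT : 0 < sT.
  have := @DS_term I J lam i1 j1 hlam0; rewrite /DS -/L -/sT; lra.
pose g := fun j => L j / sT.
pose mu := fun j i => if Rlt_dec 0 (L j) then lam i j / L j else p i.
have hlamL : forall i j, lam i j <= L j :=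
  fun i j => @rsum_term _ (fun i => lam i j) i (fun k => hlam0 k j).
have hid : forall a : LJ I J, DS (fun i j => lam i j * a i j) = sT * dot g (Emu mu a).
  move=> a; rewrite /dot -rsum_scal /DS; apply: rsum_ext => j.
  rewrite /mu /Emu /g; case: Rlt_dec => h.
    rewrite (@rsum_ext _ (fun i => lam i j / L j * a i j) (fun i => /L j * (lam i j * a i j))); last by move=> i; field; lra.
    rewrite rsum_scal; field; lra.
  have hLj : L j = 0 by have := hL0 j; lra.
  rewrite (@rsum_ext _ (fun i => lam i j * a i j) (fun _ => 0)); last first.
    move=> i; have -> : lam i j = 0 by have := hlam0 i j; have := hlamL i j; lra.
    ring.
  rewrite rsum_0 (_ : L j / sT = 0); first ring. rewrite hLj; field; lra.
have hM1 : M1 mu.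
  split.
    move=> j i; rewrite /mu; case: Rlt_dec => h.
      rewrite /Rdiv; apply: Rmult_le_pos; first exact: hlam0.
      by apply: Rlt_le; apply: Rinv_0_lt_compat.
    by apply: Rlt_le; apply: hp.
  move=> j; rewrite /mu; case: Rlt_dec => h; last exact: hp1.
  rewrite (@rsum_ext _ (fun i => lam i j / L j) (fun i => /L j * lam i j)); last by move=> i; field; lra.
  rewrite rsum_scal; change (rsum (fun i => lam i j)) with (L j); field; lra.
have hg0 : forall j, 0 <= g j.
  move=> j; rewrite /g /Rdiv; apply: Rmult_le_pos; first exact: hL0.
  by apply: Rlt_le; apply: Rinv_0_lt_compat.
have hg1 : dot g (@one_vec J) = 1.
  rewrite /dot (@rsum_ext _ _ (fun j => /sT * L j)).
    rewrite rsum_scal; change (rsum L) with sT; field; lra.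
  by move=> j; rewrite /g /one_vec; field; lra.
have hvi' : forall a, acceptance Rm a ->
    DS (fun i j => lam i j * a i j) <= DS (fun i j => lam i j * s i j).
  move=> a ha; have := hvi a ha.
  have -> : DS (fun i j => (w0 i j - s i j) * (a i j - s i j))
    = 1 * DS (fun i j => lam i j * a i j) + (-1) * DS (fun i j => lam i j * s i j)
      + 0 * DS (fun i j => lam i j * s i j).
    by rewrite DS_lin3; apply: DS_ext => i j; rewrite /lam; ring.
  lra.
pose Pn := penalty_set Rm mu g.
have hub : is_upper_bound Pn (dot g (Emu mu s)).
  move=> x [a [ha ->]]; have := hvi' a ha; rewrite !hid => h.
  exact: (Rmult_le_reg_l sT _ _ hsT h).
have hne : exists x, Pn x by exists (dot g (Emu mu s)); exists s.
case: (completeness Pn (ex_intro _ _ hub) hne) => b hb.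
have hb_le : b <= dot g (Emu mu s) := proj2 hb _ hub.
exists (dot g (fun j => Emu mu u j - v j) - b); split.
  by exists mu, g, b.
have e1 : DS (fun i j => lam i j * w0 i j)
    = 1 * DS (fun i j => lam i j * s i j) + 1 * nrm2 lam + 0 * nrm2 lam.
  by rewrite /nrm2 DS_lin3; apply: DS_ext => i j; rewrite /lam; ring.
have hn : 0 < nrm2 lam by have := nrm2_coord lam i1 j1; nra.
rewrite !hid in e1.
have hsh : dot g (Emu mu w0) = dot g (fun j => Emu mu u j - v j) - a0 :=
  emu_shift u v a0 hM1 hg1.
have : sT * dot g (Emu mu s) < sT * dot g (Emu mu w0) by lra.
move/(Rmult_lt_reg_l _ _ _ hsT); lra.
Qed.
End RM.

Unset Implicit Arguments.

Theorem lemma5p5 (I J : nat) (p : 'I_I -> R)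
  (hI : (2 <= I)%nat) (hp : forall i, 0 < p i) (hp1 : rsum p = 1)
  (Rm : setmap I J) (hR : multivariate_convex_risk_measure Rm)
  (v : vecR J) (u : LJ I J) :
  exists m : R,
    is_glb (fun a => Rm u (fun j => v j + a * @one_vec J j)) m /\
    is_lub (fun x => exists (mu : 'I_J -> 'I_I -> R) (g : vecR J) (b : R),
              M1 mu /\ (forall j, 0 <= g j) /\ dot g (@one_vec J) = 1 /\
              is_lub (penalty_set Rm mu g) b /\
              x = dot g (fun j => Emu mu u j - v j) - b) m.
Proof.
have [H1 [H2 [H3 [H4 H5]]]] := hR.
pose S := fun a => Rm u (fun j => v j + a * @one_vec J j).
have hne : exists a, S a.
  have [[x hx] _] := H3 u.
  exists (rsum (fun j => Rabs (x j - v j))); apply: (rm_up hR hx) => j.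
  have := @rsum_term _ (fun j => Rabs (x j - v j)) j (fun k => Rabs_pos _).
  rewrite /one_vec; move: (rsum _) => r; split_Rabs; lra.
have [_ [y0 hy0]] := H3 u.
pose K := rsum (fun j => Rabs (y0 j - v j)).
have hlow : forall a, S a -> - K <= a.
  move=> a ha; apply: Rnot_lt_le => hlt; apply: hy0; apply: (rm_up hR ha) => j.
  have := @rsum_term _ (fun j => Rabs (y0 j - v j)) j (fun k => Rabs_pos _).
  rewrite /one_vec -/K; split_Rabs; lra.
pose E := fun x => S (- x).
have hbE : bound E by exists K => x hx; have := hlow _ hx; lra.
have hneE : exists x, E x by case: hne => a ha; exists (-a); rewrite /E Ropp_involutive.
case: (completeness E hbE hneE) => M [HM1 HM2].
exists (- M).
have glb1 : forall a, S a -> - M <= a.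
  move=> a ha; have : E (-a) by rewrite /E Ropp_involutive.
  move/HM1; lra.
have glb2 : forall b, (forall a, S a -> b <= a) -> b <= - M.
  move=> b hb; have : M <= - b.
    by apply: HM2 => x hx; have := hb _ hx; lra.
  lra.
split; first by split.
split.
  move=> x [mu [g [b [hM [hg0 [hg1 [hb ->]]]]]]].
  apply: glb2 => a ha.
  have hacc : acceptance Rm (fun i j => u i j - (v j + a * @one_vec J j)).
    rewrite /acceptance; have := rm_trans hR (fun j => - (v j + a * @one_vec J j)) ha.
    have -> : addc u (fun j => - (v j + a * @one_vec J j))
        = (fun i j => u i j - (v j + a * @one_vec J j)).
      by apply: functional_extensionality => i; apply: functional_extensionality => j;
        rewrite /addc; ring.
    have -> : (fun j => v j + a * @one_vec J j + - (v j + a * @one_vec J j)) = (fun _ => 0).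
      by apply: functional_extensionality => j; ring.
    done.
  have := proj1 hb _ (ex_intro _ _ (conj hacc erefl)).
  rewrite emu_shift //; lra.
move=> bnd hbnd; apply: Rnot_lt_le => hlt.
have hS : ~ S bnd by move=> h; have := glb1 _ h; lra.
have [x [hx hxb]] := sep_main hp hp1 hR hS.
have := hbnd x hx; lra.
Qed.
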